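(* Let $R$ be a commutative ring, $n$ a positive integer and $J$ a weakly $n$-absorbing ideal of $R$. (1) If $I$ is an ideal of $R$ with $I\subseteq J$, then $J/I$ is a weakly $n$-absorbing ideal of $R/I$. (2) If $T$ is a subring of $R$, then $J\cap T$ is a weakly $n$-absorbing ideal of $T$. (3) If $S$ is a multiplicatively closed subset of $R$ with $J\cap S=\emptyset$, then $J_S$ is a weakly $n$-absorbing ideal of $R_S$.
   Context: All rings are commutative with $1\neq0$ (subrings share the identity). A proper ideal $J$ of $R$ is weakly $n$-absorbing if whenever $0\neq a_1\cdots a_{n+1}\in J$ with $a_1,\dots,a_{n+1}\in R$, there are $n$ of the $a_i$'s whose product is in $J$. $R_S$ and $J_S$ denote localizations at $S$. *)

(* Defs.v *)
From HB Require Import structures.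
From mathcomp Require Import all_boot all_order all_algebra.
Set Implicit Arguments. Unset Strict Implicit. Unset Printing Implicit Defensive.
Import GRing.Theory.
Local Open Scope ring_scope.

Definition is_ideal (R : comNzRingType) (J : R -> Prop) : Prop :=
  [/\ J 0,
      (forall x y, J x -> J y -> J (x + y)) &
      (forall r x, J x -> J (r * x))].

Definition proper_ideal (R : comNzRingType) (J : R -> Prop) : Prop :=
  is_ideal J /\ ~ J 1.

Definition weakly_n_absorbing (R : comNzRingType) (n : nat) (J : R -> Prop)
  : Prop :=
  proper_ideal J /\
  forall a : 'I_n.+1 -> R,
    \prod_(i < n.+1) a i != 0 -> J (\prod_(i < n.+1) a i) ->
    exists i : 'I_n.+1, J (\prod_(j < n.+1 | j != i) a j).

(* f : R -> Q presents Q as the quotient ring R/I (surjective ring morphism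
   with kernel exactly I). *)
Definition is_quotient_map (R Q : comNzRingType) (I : R -> Prop)
  (f : {rmorphism R -> Q}) : Prop :=
  (forall z : Q, exists x : R, f x = z) /\ (forall x : R, f x = 0 <-> I x).

(* Image of a subset under a map: for the quotient map this is J/I. *)
Definition image_set (R Q : Type) (f : R -> Q) (J : R -> Prop) : Q -> Prop :=
  fun z => exists2 x, J x & f x = z.

Definition mult_closed (R : comNzRingType) (S : R -> Prop) : Prop :=
  S 1 /\ (forall x y, S x -> S y -> S (x * y)).

(* f : R -> RS presents RS as the localization R_S (the usual universal
   characterization, as in Mathlib's IsLocalization). *)
Definition is_localization (R RS : comNzRingType) (S : R -> Prop)
  (f : {rmorphism R -> RS}) : Prop :=
  [/\ (forall s, S s -> exists u : RS, f s * u = 1),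
      (forall z : RS, exists r s, S s /\ z * f s = f r) &
      (forall x y, f x = f y <-> exists2 c, S c & c * x = c * y)].

Definition loc_ideal (R RS : comNzRingType) (S : R -> Prop)
  (f : {rmorphism R -> RS}) (J : R -> Prop) : RS -> Prop :=
  fun z => exists j s, [/\ J j, S s & z * f s = f j].

(* Main.v *)
Require Import Defs.
From HB Require Import structures.
From mathcomp Require Import all_boot all_order all_algebra.
From mathcomp Require Import ring.
From Stdlib Require Import ClassicalEpsilon.
Local Open Scope ring_scope.
Import GRing.Theory.

Lemma my_choice (A B : Type) (P : A -> B -> Prop) :
  (forall a, exists b, P a b) -> exists h : A -> B, forall a, P a (h a).
Proof.
move=> H; exists (fun a => proj1_sig (constructive_indefinite_description _ (H a))).
by move=> a; case: (constructive_indefinite_description _ (H a)).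
Qed.

Lemma idealN (R : comNzRingType) (J : R -> Prop) x : is_ideal J -> J x -> J (- x).
Proof. case=> _ _ HM Jx; rewrite -mulN1r; exact: HM. Qed.

Theorem mainTheorem13 (R : comNzRingType) (n : nat) (J : R -> Prop) :
  (0 < n)%N -> weakly_n_absorbing n J ->
  (* (1) quotients *)
  (forall (I : R -> Prop) (Q : comNzRingType) (f : {rmorphism R -> Q}),
      is_ideal I -> (forall x, I x -> J x) -> is_quotient_map I f ->
      weakly_n_absorbing n (image_set f J)) /\
  (* (2) subrings (T embedded in R by an injective unital ring morphism g) *)
  (forall (T : comNzRingType) (g : {rmorphism T -> R}),
      injective g ->
      weakly_n_absorbing n (fun t : T => J (g t))) /\
  (* (3) localizations *)
  (forall (S : R -> Prop) (RS : comNzRingType) (f : {rmorphism R -> RS}),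
      mult_closed S -> (forall x, ~ (J x /\ S x)) -> is_localization S f ->
      weakly_n_absorbing n (loc_ideal S f J)).
Proof.
move=> _ [[HJ NJ1] Habs].
have [J0 JD JM] := HJ.
split; [|split].
- move=> I Q f HI IJ [fsurj fker]; split; first split; first split.
  + by exists 0 => //; rewrite rmorph0.
  + move=> _ _ [x Jx <-] [y Jy <-]; exists (x + y); [exact: JD | by rewrite rmorphD].
  + move=> z _ [x Jx <-]; have [r <-] := fsurj z.
    by exists (r * x); [exact: JM | rewrite rmorphM].
  + case=> x Jx fx; apply: NJ1.
    have Ix1 : I (x - 1) by apply/fker; rewrite rmorphB fx rmorph1 subrr.
    have := JD _ _ Jx (@idealN _ _ _ HJ (IJ _ Ix1)).
    by rewrite opprB addrC subrK.
  + move=> b nz [x Jx fx].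
    have [a Ha] := @my_choice _ _ (fun i x => f x = b i) (fun i => fsurj (b i)).
    have Hp : forall P : pred 'I_n.+1, f (\prod_(i < n.+1 | P i) a i) = \prod_(i < n.+1 | P i) b i.
      by move=> P; rewrite rmorph_prod; apply: eq_bigr => i _; rewrite Ha.
    have Ja : J (\prod_(i < n.+1) a i).
      have Id : I (\prod_(i < n.+1) a i - x).
        by apply/fker; rewrite rmorphB (Hp xpredT) fx subrr.
      have := JD _ _ (IJ _ Id) Jx; by rewrite subrK.
    have nza : \prod_(i < n.+1) a i != 0.
      apply: contraNneq nz => e; by rewrite -(Hp xpredT) e rmorph0.
    have [i Ji] := Habs a nza Ja.
    by exists i; exists (\prod_(j < n.+1 | j != i) a j) => //; rewrite Hp.
- move=> T g ginj; split; first split; first split.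
  + by rewrite rmorph0.
  + by move=> x y Jx Jy; rewrite rmorphD; exact: JD.
  + by move=> r x Jx; rewrite rmorphM; exact: JM.
  + by rewrite rmorph1.
  + move=> a nz Ja.
    have Hp : forall P : pred 'I_n.+1, g (\prod_(i < n.+1 | P i) a i) = \prod_(i < n.+1 | P i) g (a i).
      by move=> P; rewrite rmorph_prod.
    have nz' : \prod_(i < n.+1) g (a i) != 0.
      rewrite -(Hp xpredT); apply: contraNneq nz => e.
      apply/eqP; exact: (ginj _ _ (etrans e (esym (rmorph0 g)))).
    have [i Ji] := Habs (fun i => g (a i)) nz'
       (eq_ind _ J Ja _ (Hp xpredT)).
    by exists i; rewrite Hp.
- move=> S RS f [S1 SM] disj [Sunit Sfrac Seq].
  have Scanc : forall x y, S x -> f x * y = 0 -> y = 0.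
    move=> x y Sx e; have [u hu] := Sunit x Sx.
    by rewrite -[y]mul1r -hu mulrAC e mul0r.
  have Sprod : forall (P : pred 'I_n.+1) (F : 'I_n.+1 -> R),
      (forall i, S (F i)) -> S (\prod_(i < n.+1 | P i) F i).
    by move=> P F HF; apply: (big_ind S) => // i _; exact: HF.
  split; first split; first split.
  + by exists 0, 1; split => //; rewrite !rmorph0 mul0r.
  + move=> z1 z2 [j1 [s1 [J1 S1' e1]]] [j2 [s2 [J2 S2' e2]]].
    exists (j1 * s2 + j2 * s1), (s1 * s2); split.
    * by apply: JD; rewrite mulrC; apply: (JM).
    * exact: SM.
    * rewrite rmorphD !rmorphM -e1 -e2; ring.
  + move=> r z [j [s [Jj Ss e]]].
    have [r' [s' [Ss' e']]] := Sfrac r.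
    exists (r' * j), (s' * s); split; [exact: JM | exact: SM |].
    by rewrite !rmorphM -e' -e; ring.
  + case=> j [s [Jj Ss e]].
    rewrite mul1r in e; have [c Sc e2] := (Seq s j).1 e.
    apply: (disj (c * s)); split; [rewrite e2; exact: JM | exact: SM].
  + move=> b nz [j [s [Jj Ss e]]].
    have [rs Hrs] := @my_choice _ (R * R)%type (fun i p => S p.2 /\ b i * f p.2 = f p.1) (fun i => let: ex_intro r (ex_intro s h) := Sfrac (b i) in ex_intro _ (r, s) h).
    pose r i := (rs i).1; pose t i := (rs i).2.
    have St : forall i, S (t i) by move=> i; case: (Hrs i).
    have Ht : forall i, b i * f (t i) = f (r i) by move=> i; case: (Hrs i).
    have Hf : forall P : pred 'I_n.+1,
        f (\prod_(i < n.+1 | P i) r i) = (\prod_(i < n.+1 | P i) b i) * f (\prod_(i < n.+1 | P i) t i).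
      move=> P; rewrite !rmorph_prod -big_split /=.
      by apply: eq_bigr => i _; rewrite Ht.
    have : f (\prod_i r i * s) = f (j * \prod_i t i).
      by rewrite !rmorphM (Hf xpredT) -e; ring.
    case/(Seq _ _).1 => c Sc ec.
    pose u := c * s.
    have Su : S u by exact: SM.
    pose a i := u * r i.
    have Hpa : forall P : pred 'I_n.+1,
        \prod_(i < n.+1 | P i) a i = (\prod_(i < n.+1 | P i) u) * \prod_(i < n.+1 | P i) r i.
      by move=> P; rewrite big_split.
    have Ja : J (\prod_(i < n.+1) a i).
      rewrite Hpa big_ord_recl -mulrA mulrCA.
      have -> : u * \prod_i r i = (c * \prod_i t i) * j.
        by rewrite /u -mulrA [s * _]mulrC ec; ring.
      exact: (JM _ _ (JM _ _ Jj)).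
    have nza : \prod_(i < n.+1) a i != 0.
      apply/eqP => a0.
      have : f (\prod_(i < n.+1) u * \prod_i t i) * \prod_i b i = 0.
        by rewrite rmorphM mulrAC -mulrA -(Hf xpredT) -rmorphM -Hpa a0 rmorph0.
      move/(Scanc _ _ (SM _ _ (Sprod _ _ (fun=> Su)) (Sprod _ _ St))).
      by move/eqP; rewrite (negbTE nz).
    have [i Ji] := Habs a nza Ja.
    exists i; exists (\prod_(j < n.+1 | j != i) a j),
      ((\prod_(j < n.+1 | j != i) u) * \prod_(j < n.+1 | j != i) t j).
    split => //; first exact: SM (Sprod _ _ (fun=> Su)) (Sprod _ _ St).
    have Hfi := Hf (fun j => j != i); rewrite /= in Hfi.
    by rewrite Hpa !rmorphM Hfi; ring.
Qed.
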